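(* Let $\mathcal A$ be a biflat Banach algebra with a left approximate identity, and suppose that for every closed two-sided ideal $I$ of $\mathcal A$, $\mathcal A\hat\otimes_\pi\cdot$ respects $I$ into $\mathcal A\hat\otimes_\pi\mathcal A$ isomorphically. Then $\mathcal A$ is ideally amenable.
   Context: $\mathcal A\hat\otimes_\pi\mathcal A$ is the projective tensor product, a Banach $\mathcal A$-bimodule via $a\cdot(b\otimes c)=ab\otimes c$, $(b\otimes c)\cdot a=b\otimes ca$; $\Delta:\mathcal A\hat\otimes_\pi\mathcal A\to\mathcal A$, $a\otimes b\mapsto ab$. $\mathcal A$ is biflat if $\Delta^*:\mathcal A^*\to(\mathcal A\hat\otimes_\pi\mathcal A)^*$ has a bounded left inverse which is an $\mathcal A$-bimodule homomorphism (duals carry $\langle x,a\cdot f\rangle=\langle x\cdot a,f\rangle$, $\langle x,f\cdot a\rangle=\langle a\cdot x,f\rangle$). ''$\mathcal A\hat\otimes_\pi\cdot$ respects $I$ into $\mathcal A\hat\otimes_\pi\mathcal A$ isomorphically'' means there is $\lambda\ge1$ with $\pi(z;\mathcal A,I)\le\lambda\,\pi(z;\mathcal A,\mathcal A)$ for all $z\in\mathcal A\otimes I$, $\pi(z;E,F)$ being the projective norm in $E\hat\otimes_\pi F$. $\mathcal A$ is ideally amenable if for every closed two-sided ideal $I$, every derivation $D:\mathcal A\to I^*$ (continuous linear, $D(ab)=a\cdot D(b)+D(a)\cdot b$) is of the form $D(a)=a\cdot f-f\cdot a$ with $f\in I^*$. *)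

(* Defs.v *)
From mathcomp Require Import all_boot all_order all_algebra.
From mathcomp Require Import all_classical all_reals all_analysis.
From mathcomp Require Export complex.
Import Order.TTheory GRing.Theory Num.Theory.
Import numFieldNormedType.Exports.
Set Implicit Arguments. Unset Strict Implicit. Unset Printing Implicit Defensive.
Local Open Scope ring_scope.
Local Open Scope classical_set_scope.

Section BanachAlg.
Context {K : numFieldType} {V : normedModType K}.

(* [mul] makes V a (not necessarily unital) normed algebra over K;
   together with completeness of V this is a Banach algebra. *)
Definition banach_algebra_mul (mul : V -> V -> V) : Prop :=
  ((forall a b c, mul (mul a b) c = mul a (mul b c)) /\
     (forall a b c, mul (a + b) c = mul a c + mul b c) /\
     (forall a b c, mul a (b + c) = mul a b + mul a c) /\
     (forall (k : K) a b, mul (k *: a) b = k *: mul a b) /\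
     (forall (k : K) a b, mul a (k *: b) = k *: mul a b) /\
     (forall a b, `|mul a b| <= `|a| * `|b|)).

Definition has_left_approx_identity (mul : V -> V -> V) : Prop :=
  exists (D : Type) (le : D -> D -> Prop) (e : D -> V),
    ((exists d : D, True) /\
     (forall d, le d d) /\
     (forall x y z, le x y -> le y z -> le x z) /\
     (forall x y, exists z, le x z /\ le y z) /\
     (forall a (eps : K), 0 < eps ->
           exists d0, forall d, le d0 d -> `|mul (e d) a - a| < eps)).

Definition closed_ideal (mul : V -> V -> V) (I : set V) : Prop :=
  (closed I /\
     I 0 /\
     (forall x y, I x -> I y -> I (x + y)) /\
     (forall (k : K) x, I x -> I (k *: x)) /\
     (forall a x, I x -> I (mul a x) /\ I (mul x a))).

(* f restricted to the subspace I is a bounded linear functional,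
   i.e. f represents an element of I^* (values outside I are irrelevant). *)
Definition bdd_functional_on (I : set V) (f : V -> K) : Prop :=
  ((forall x y, I x -> I y -> f (x + y) = f x + f y) /\
     (forall (k : K) x, I x -> f (k *: x) = k * f x) /\
     (exists C : K, forall x, I x -> `|f x| <= C * `|x|)).

Definition bilinear_form (F : V -> V -> K) : Prop :=
  ((forall a b c, F (a + b) c = F a c + F b c) /\
     (forall a b c, F a (b + c) = F a b + F a c) /\
     (forall (k : K) a b, F (k *: a) b = k * F a b) /\
     (forall (k : K) a b, F a (k *: b) = k * F a b)).

(* bounded bilinear forms on V x V: these are exactly the elements of the
   dual (V \hat\otimes_\pi V)^*, via <a (x) b, F> = F a b. *)
Definition bdd_bilinear (F : V -> V -> K) : Prop :=
  bilinear_form F /\ exists M : K, forall a b, `|F a b| <= M * `|a| * `|b|.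

(* Biflatness: Delta^* : A^* -> (A \hat\otimes A)^*, (Delta^* phi)(a,b) = phi(ab),
   has a bounded left inverse rho which is an A-bimodule homomorphism.
   Module actions: (c.F)(x,y) = F(x, yc), (F.c)(x,y) = F(cx, y) on (A(x)A)^*,
   (c.phi)(x) = phi(xc), (phi.c)(x) = phi(cx) on A^*. *)
Definition biflat (mul : V -> V -> V) : Prop :=
  exists rho : (V -> V -> K) -> (V -> K),
    ((forall F, bdd_bilinear F -> bdd_functional_on setT (rho F)) /\
     (forall F G, bdd_bilinear F -> bdd_bilinear G -> forall a,
            rho (fun x y => F x y + G x y) a = rho F a + rho G a) /\
     (forall (k : K) F, bdd_bilinear F -> forall a,
            rho (fun x y => k * F x y) a = k * rho F a) /\
     (exists C : K, forall F (M : K), bdd_bilinear F ->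
            (forall x y, `|F x y| <= M * `|x| * `|y|) ->
            forall a, `|rho F a| <= C * M * `|a|) /\
     (forall c F, bdd_bilinear F -> forall a,
            rho (fun x y => F x (mul y c)) a = rho F (mul a c)) /\
     (forall c F, bdd_bilinear F -> forall a,
            rho (fun x y => F (mul c x) y) a = rho F (mul c a)) /\
     (forall phi, bdd_functional_on setT phi -> forall a,
            rho (fun x y => phi (mul x y)) a = phi a)).

(* Finite representations sum_i a_i (x) b_i of elements of the algebraic
   tensor product V (x) V; two lists represent the same tensor iff every
   bilinear form takes the same value on them. *)
Definition tensor_eq (s t : seq (V * V)) : Prop :=
  forall F, bilinear_form F ->
    \sum_(p <- s) F p.1 p.2 = \sum_(p <- t) F p.1 p.2.

Definition rep_cost (s : seq (V * V)) : K := \sum_(p <- s) `|p.1| * `|p.2|.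

(* the set whose infimum is the projective norm pi(z; A, P) of the tensor z
   represented by s, when the right factors are taken in P *)
Definition pi_costs (P : set V) (s : seq (V * V)) : set K :=
  [set c | exists t : seq (V * V),
     ((forall p, p \in t -> P p.2) /\
     tensor_eq t s /\
     c = rep_cost t)].

(* A \hat\otimes_\pi . respects I into A \hat\otimes_\pi A isomorphically:
   exists lam >= 1, pi(z;A,I) <= lam pi(z;A,A) for all z in A (x) I.
   The inequality between infima is unfolded:
   inf X <= lam inf Y  <->  forall y in Y, eps > 0, exists x in X, x <= lam y + eps. *)
Definition respects_isomorphically (I : set V) : Prop :=
  exists lam : K, 1 <= lam /\
    forall s : seq (V * V), (forall p, p \in s -> I p.2) ->
    forall y, pi_costs setT s y -> forall eps : K, 0 < eps ->
    exists x, pi_costs I s x /\ x <= lam * y + eps.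

(* D : A -> I^*, represented as D a x for a in A, x in I, is a continuous
   derivation; module actions (a.f)(x) = f(xa), (f.a)(x) = f(ax). *)
Definition derivation_into_dual (mul : V -> V -> V) (I : set V)
    (D : V -> V -> K) : Prop :=
  ((forall a, bdd_functional_on I (D a)) /\
     (forall a b x, I x -> D (a + b) x = D a x + D b x) /\
     (forall (k : K) a x, I x -> D (k *: a) x = k * D a x) /\
     (exists C : K, forall a x, I x -> `|D a x| <= C * `|a| * `|x|) /\
     (forall a b x, I x -> D (mul a b) x = D b (mul x a) + D a (mul b x))).

Definition inner_into_dual (mul : V -> V -> V) (I : set V)
    (D : V -> V -> K) : Prop :=
  exists f : V -> K, bdd_functional_on I f /\
    forall a x, I x -> D a x = f (mul x a) - f (mul a x).

Definition ideally_amenable (mul : V -> V -> V) : Prop :=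
  forall I : set V, closed_ideal mul I ->
  forall D : V -> V -> K, derivation_into_dual mul I D -> inner_into_dual mul I D.

End BanachAlg.

(* Main.v *)
Require Import Defs.
From mathcomp Require Import all_boot all_order all_algebra.
From mathcomp Require Import all_classical all_reals all_analysis.
From mathcomp Require Import complex.
Import numFieldNormedType.Exports.
Local Open Scope ring_scope.
Import Order.TTheory GRing.Theory Num.Theory.
Local Open Scope classical_set_scope.
Set Implicit Arguments. Unset Strict Implicit. Unset Printing Implicit Defensive.
Section PZorn.
Variables (X : eqType) (Y : Type).

Definition pext (a b : set X * (X -> Y)) :=
  a.1 `<=` b.1 /\ forall x, a.1 x -> a.2 x = b.2 x.

Lemma pext_refl a : pext a a.
Proof. by split. Qed.

Lemma pext_trans a b c : pext a b -> pext b c -> pext a c.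
Proof.
move=> [ab1 ab2] [bc1 bc2]; split; first by move=> x /ab1 /bc1.
by move=> x ax; rewrite ab2 // bc2 //; exact: ab1.
Qed.

Lemma partial_zorn (Adm : set X * (X -> Y) -> Prop) (a0 : set X * (X -> Y)) :
  Adm a0 ->
  (forall C : set (set X * (X -> Y)), (forall a, C a -> Adm a) ->
     (forall a b, C a -> C b -> pext a b \/ pext b a) -> (exists a, C a) ->
     exists b, Adm b /\ forall a, C a -> pext a b) ->
  exists m, Adm m /\ pext a0 m /\ forall b, Adm b -> pext m b -> b.1 `<=` m.1.
Proof.
move=> A0 HC.
pose T := {a | Adm a /\ pext a0 a}.
pose t0 : T := exist _ a0 (conj A0 (pext_refl a0)).
pose Rl (r s : T) := `[< pext (sval r) (sval s) >].
have [|||m mmax] := @ZL_preorder T t0 Rl.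
- by move=> t; apply/asboolP; exact: pext_refl.
- by move=> r s t /asboolP rs /asboolP st; apply/asboolP; exact: pext_trans rs st.
- move=> A Atot.
  have [[a Aa]|A0'] := pselect (exists a, A a); last first.
    exists t0 => s As; exfalso; apply: A0'; by exists s.
  have [|||b [Ab bub]] := HC [set sval x | x in A].
  + by move=> _ [x _ <-]; case: (svalP x).
  + move=> _ _ [x Ax <-] [y Ay <-].
    by case: (Atot x y Ax Ay) => /asboolP; [left|right].
  + by exists (sval a), a.
  have a0b : pext a0 b.
    apply: pext_trans (proj2 (svalP a)) _; apply: bub; by exists a.
  exists (exist _ b (conj Ab a0b)) => s As; apply/asboolP => /=.
  apply: bub; by exists s.
- exists (sval m); split; first exact: (proj1 (svalP m)).
  split; first exact: (proj2 (svalP m)).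
  move=> b Ab mb.
  have a0b : pext a0 b := pext_trans (proj2 (svalP m)) mb.
  have /asboolP := mmax (exist _ b (conj Ab a0b)) (asboolT mb).
  by case.
Qed.

Section Union.
Variable C : set (set X * (X -> Y)).
Hypothesis Ctot : forall a b, C a -> C b -> pext a b \/ pext b a.
Variable a1 : set X * (X -> Y).
Hypothesis Ca1 : C a1.

Definition uP : set X := [set x | exists a, C a /\ a.1 x].
Definition uG (x : X) : Y :=
  match pselect (exists a, C a /\ a.1 x) with
  | left h => (projT1 (cid h)).2 x
  | right _ => a1.2 x
  end.

Lemma union_ext a : C a -> pext a (uP, uG).
Proof.
move=> Ca; split; first by move=> x ax; exists a.
move=> x ax /=; rewrite /uG; case: pselect => [h|]; last first.
  by move=> nh; exfalso; apply: nh; exists a.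
case: (cid h) => b [Cb bx] /=.
case: (Ctot Ca Cb) => [[_ ->]|[_ <-]] //.
Qed.

Lemma union_fin (l : seq X) : (forall x, x \in l -> uP x) ->
  exists a, C a /\ forall x, x \in l -> a.1 x.
Proof.
elim: l => [|y l IH] H; first by exists a1; split.
have [a [Ca al]] : exists a, C a /\ forall x, x \in l -> a.1 x.
  by apply: IH => x xl; apply: H; rewrite inE xl orbT.
have [b [Cb by1]] : uP y by apply: H; rewrite inE eqxx.
case: (Ctot Ca Cb) => [[ab _]|[ba _]].
- exists b; split=> // x; rewrite inE => /orP[/eqP ->//|/al]; exact: ab.
- exists a; split=> // x; rewrite inE => /orP[/eqP ->|/al//]; exact: ba.
Qed.
End Union.
End PZorn.
Section AlgExt.
Variables (K : fieldType) (V : lmodType K).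

Definition lin_inv (P : set V) (f : V -> K) :=
  forall l : seq (K * V), (forall p, p \in l -> P p.2) ->
    \sum_(p <- l) p.1 *: p.2 = 0 -> \sum_(p <- l) p.1 * f p.2 = 0.

Lemma big_split_pred (T : eqType) (M : zmodType) (l : seq T) (a : pred T) (F : T -> M) :
  \sum_(p <- l) F p = \sum_(p <- l | a p) F p + \sum_(p <- l | ~~ a p) F p.
Proof. by rewrite (bigID a). Qed.

Lemma alg_ext (S : set V) (f0 : V -> K) : lin_inv S f0 ->
  exists f : V -> K, (forall x y, f (x + y) = f x + f y) /\
    (forall k x, f (k *: x) = k * f x) /\ (forall x, S x -> f x = f0 x).
Proof.
move=> Hinv.
pose Adm (a : set V * (V -> K)) := S `<=` a.1 /\ (forall x, S x -> a.2 x = f0 x) /\ lin_inv a.1 a.2.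
have [||m [[Sm [fm invm]] [_ mmax]]] := @partial_zorn V K Adm (S, f0).
- by split=> //; split.
- move=> C CA Ctot [a1 Ca1].
  exists (uP C, uG C a1); split; last by move=> a Ca; exact: union_ext.
  have [SA [fA _]] := CA _ Ca1.
  split; first by move=> x /SA Px; exists a1.
  split.
    move=> x Sx; rewrite -fA //.
    by case: (union_ext Ctot a1 Ca1) => _ <- //; exact: SA.
  move=> l lP l0.
  have lU : forall x, x \in map snd l -> uP C x.
    by move=> x /mapP [p pl ->]; exact: lP.
  have [a [Ca al]] := union_fin Ctot Ca1 lU.
  + have [_ [_ ia]] := CA _ Ca.
    have <- : \sum_(p <- l) p.1 * a.2 p.2 = \sum_(p <- l) p.1 * uG C a1 p.2.
      apply: eq_big_seq => p pl; congr (_ * _).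
      case: (union_ext Ctot a1 Ca) => _ -> //.
      by apply: al; apply/mapP; exists p.
    by apply: ia => // p pl; apply: al; apply/mapP; exists p.
- exists m.2.
  have mT : forall x, m.1 x.
    move=> v0; apply/not_notP => nv0.
    pose val0 := match pselect (exists l : seq (K * V), (forall p, p \in l -> m.1 p.2) /\
                         \sum_(p <- l) p.1 *: p.2 = v0) with
                 | left h => \sum_(p <- projT1 (cid h)) p.1 * m.2 p.2
                 | right _ => 0 end.
    pose f' x := if x == v0 then val0 else m.2 x.
    pose P' := [set x | m.1 x \/ x = v0].
    have mP' : pext m (P', f').
      split=> [x mx|x mx]; first by left.
      rewrite /f' /=; case: eqP => // xv; by subst.
    suff AP : Adm (P', f') by apply: nv0; apply: (mmax _ AP mP'); right.
    split; first by move=> x /Sm mx; left.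
    split; first by move=> x Sx; rewrite /f' /=; case: eqP => [xv|]; [subst; case: nv0; exact: Sm|auto].
    move=> l lP l0 /=.
    pose a := fun p : K * V => p.2 == v0.
    pose l1 := [seq p <- l | ~~ a p].
    pose k2 := \sum_(p <- l | a p) p.1.
    have E1 : \sum_(p <- l) p.1 *: p.2 = \sum_(p <- l1) p.1 *: p.2 + k2 *: v0.
      rewrite (big_split_pred _ a) addrC big_filter; congr (_ + _).
      rewrite scaler_suml; apply: eq_bigr => p /eqP -> //.
    have E2 : \sum_(p <- l) p.1 * f' p.2 = \sum_(p <- l1) p.1 * m.2 p.2 + k2 * val0.
      rewrite (big_split_pred _ a) addrC big_filter; congr (_ + _).
        apply: eq_bigr => p /negbTE ap; by rewrite /f' /= -/(a p) ap.
      rewrite mulr_suml; apply: eq_bigr => p ap; by rewrite /f' /= -/(a p) ap.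
    have l1P : forall p, p \in l1 -> m.1 p.2.
      move=> p; rewrite mem_filter => /andP [ap pl]; case: (lP p pl) => // pv.
      by move: ap; rewrite /a pv eqxx.
    rewrite E2.
    have [k20|k2n0] := eqVneq k2 0.
      rewrite k20 mul0r addr0; apply: (invm l1 l1P).
      by move: l0; rewrite E1 k20 scale0r addr0.
    have ex : exists l0 : seq (K * V), (forall p, p \in l0 -> m.1 p.2) /\
                         \sum_(p <- l0) p.1 *: p.2 = v0.
      exists [seq (- p.1 / k2, p.2) | p <- l1]; split.
        move=> p /mapP [q ql ->]; exact: (l1P q ql).
      rewrite big_map /=.
      have : \sum_(p <- l1) p.1 *: p.2 = - (k2 *: v0) by apply/eqP; rewrite -addr_eq0 -E1 l0.
      move=> H; under eq_bigr => p _ do rewrite mulrC -scalerA scaleNr.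
      rewrite -scaler_sumr sumrN H opprK scalerA mulVf // scale1r //.
    rewrite /val0; case: pselect => [h|]; last by [].
    case: (cid h) => l2 [l2P l2s] /=.
    have := invm (l1 ++ [seq (k2 * p.1, p.2) | p <- l2]).
    rewrite !big_cat !big_map /=.
    have -> : \sum_(i <- l2) (k2 * i.1) *: i.2 = k2 *: v0.
      by rewrite -l2s scaler_sumr; apply: eq_bigr => p _; rewrite scalerA.
    rewrite -E1 l0 => H.
    rewrite -[RHS](H _ (erefl _)); last first.
      move=> p; rewrite mem_cat => /orP [pl|/mapP [q ql ->]]; [exact: (l1P p pl)|exact: (l2P q ql)].
    congr (_ + _); rewrite mulr_sumr; apply: eq_bigr => p _; by rewrite mulrA.
  split.
    move=> x y.
    move: (invm [:: (1, x); (1, y); (-1, x + y)] (fun p _ => mT p.2)).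
    rewrite !big_cons !big_nil /= !addr0 !scale1r !mul1r scaleN1r mulN1r addrA subrr.
    by move=> /(_ erefl) /eqP; rewrite addrA subr_eq0 => /eqP <-.
  split.
    move=> k x.
    move: (invm [:: (1, k *: x); (-k, x)] (fun p _ => mT p.2)).
    rewrite !big_cons !big_nil /= !addr0 scale1r mul1r scaleNr subrr mulNr.
    by move=> /(_ erefl) /eqP; rewrite subr_eq0 => /eqP.
  move=> x Sx; exact: fm.
Qed.

Lemma sep_vec (x : V) : x != 0 -> exists f : V -> K, (forall x y, f (x + y) = f x + f y) /\
    (forall k x, f (k *: x) = k * f x) /\ f x = 1.
Proof.
move=> x0.
have H : lin_inv [set x] (fun _ => 1).
  move=> l lP l0.
  have : \sum_(p <- l) p.1 *: p.2 = (\sum_(p <- l) p.1) *: x.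
    rewrite scaler_suml; apply: eq_big_seq => p pl; by rewrite (lP p pl).
  rewrite l0 => /esym/eqP; rewrite scaler_eq0 (negbTE x0) orbF => /eqP H.
  by under eq_bigr => p _ do rewrite mulr1.
have [f [fa [fs fx]]] := alg_ext H.
by exists f; do !split => //; rewrite fx.
Qed.

Definition in_span (L : seq V) (x : V) :=
  exists l : seq (K * V), (forall p, p \in l -> p.2 \in L) /\ x = \sum_(p <- l) p.1 *: p.2.

Lemma sep_span (L : seq V) (x : V) : ~ in_span L x ->
  exists f : V -> K, (forall x y, f (x + y) = f x + f y) /\
    (forall k x, f (k *: x) = k * f x) /\ f x = 1 /\ forall y, y \in L -> f y = 0.
Proof.
move=> nsp.
have H : lin_inv [set y | y \in L \/ y = x] (fun y => if y == x then 1 else 0).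
  move=> l lP l0.
  pose a := fun p : K * V => p.2 == x.
  pose k2 := \sum_(p <- l | a p) p.1.
  have E2 : \sum_(p <- l) p.1 * (if p.2 == x then 1 else 0) = k2.
    rewrite (big_split_pred _ a) [X in _ + X]big1 ?addr0; last first.
      by move=> p; rewrite /a => /negbTE ->; rewrite mulr0.
    by apply: eq_bigr => p; rewrite /a => ->; rewrite mulr1.
  rewrite E2; apply/eqP/negP => k2n0; apply: nsp.
  exists [seq (- p.1 / k2, p.2) | p <- l & ~~ a p]; split.
    move=> p /mapP [q]; rewrite mem_filter => /andP [aq ql] -> /=.
    by case: (lP q ql) => // qx; move: aq; rewrite /a qx eqxx.
  have E1 : \sum_(p <- l) p.1 *: p.2 = \sum_(p <- l | ~~ a p) p.1 *: p.2 + k2 *: x.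
    rewrite (big_split_pred _ a) addrC; congr (_ + _).
    rewrite scaler_suml; apply: eq_bigr => p /eqP -> //.
  rewrite big_map big_filter /=.
  under eq_bigr => p _ do rewrite mulrC -scalerA scaleNr.
  rewrite -scaler_sumr sumrN.
  have -> : \sum_(p <- l | ~~ a p) p.1 *: p.2 = - (k2 *: x) by apply/eqP; rewrite -addr_eq0 -E1 l0.
  rewrite opprK scalerA mulVf ?scale1r //; exact/negP.
have [f [fa [fs fx]]] := alg_ext H.
exists f; do !split => //.
  by rewrite fx //=; [rewrite eqxx | right].
move=> y yL; rewrite fx /=; last by left.
case: eqP => // yx; subst; exfalso; apply: nsp.
by exists [:: (1, x)]; split; [move=> p; rewrite inE => /eqP -> | rewrite big_seq1 scale1r].
Qed.
End AlgExt.
Section Crux.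
Variables (K : numFieldType) (V : normedModType K).

Lemma sum_lin1 (H : V -> K) (HD : forall x y, H (x + y) = H x + H y)
  (HZ : forall k x, H (k *: x) = k * H x) (l : seq (K * V)) :
  \sum_(q <- l) q.1 * H q.2 = H (\sum_(q <- l) q.1 *: q.2).
Proof.
have H0 : H 0 = 0 by rewrite -(scale0r 0) HZ mul0r.
elim: l => [|q l IH]; first by rewrite !big_nil H0.
by rewrite !big_cons IH HD HZ.
Qed.

Lemma sum_add_on (I : set V) (I0 : I 0) (ID : forall x y, I x -> I y -> I (x + y))
  (H : V -> K) (HD : forall x y, I x -> I y -> H (x + y) = H x + H y) (H0 : H 0 = 0)
  (T : eqType) (l : seq T) (P : pred T) (f : T -> V) :
  (forall p, p \in l -> I (f p)) ->
  I (\sum_(p <- l | P p) f p) /\ \sum_(p <- l | P p) H (f p) = H (\sum_(p <- l | P p) f p).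
Proof.
elim: l => [|q l IH] lI; first by rewrite !big_nil.
have [IH1 IH2] : I (\sum_(p <- l | P p) f p) /\ \sum_(p <- l | P p) H (f p) = H (\sum_(p <- l | P p) f p).
  by apply: IH => p pl; apply: lI; rewrite inE pl orbT.
have Iq : I (f q) by apply: lI; rewrite inE eqxx.
rewrite !big_cons; case: (P q) => //.
by rewrite IH2 HD //; split => //; apply: ID.
Qed.

Lemma bil_sum0 (F : V -> V -> K) : bilinear_form F ->
  (forall u, F u 0 = 0) /\ (forall v, F 0 v = 0).
Proof.
move=> [_ [_ [FZl FZr]]]; split=> u.
  by rewrite -(scale0r 0) FZr mul0r.
by rewrite -(scale0r 0) FZl mul0r.
Qed.

Variable I : set V.
Hypotheses (I0 : I 0) (ID : forall x y, I x -> I y -> I (x + y))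
  (IZ : forall k x, I x -> I (k *: x)).
Variable G : V -> V -> K.
Hypotheses (GDl : forall u1 u2 w, I w -> G (u1 + u2) w = G u1 w + G u2 w)
  (GZl : forall k u w, I w -> G (k *: u) w = k * G u w)
  (GDr : forall u w1 w2, I w1 -> I w2 -> G u (w1 + w2) = G u w1 + G u w2)
  (GZr : forall k u w, I w -> G u (k *: w) = k * G u w).

Lemma G0r u : G u 0 = 0.
Proof. by rewrite -(scale0r 0) GZr // mul0r. Qed.

Lemma crux_L (L : seq V) (t : seq (V * V)) :
  (forall p, p \in t -> p.1 \in L) -> (forall p, p \in t -> I p.2) ->
  (forall F, bilinear_form F -> \sum_(p <- t) F p.1 p.2 = 0) ->
  \sum_(p <- t) G p.1 p.2 = 0.
Proof.
elim: L t => [|x L' IH] t tL tI tF.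
  case: t tL {tI tF} => [|p t] tL; first by rewrite big_nil.
  by have := tL p; rewrite inE eqxx in_nil => /(_ isT).
pose a := fun p : V * V => p.1 == x.
pose tr := [seq p <- t | ~~ a p].
pose W := \sum_(p <- t | a p) p.2.
have [IW HGx] := @sum_add_on I I0 ID (G x) (fun y z Iy Iz => GDr x Iy Iz) (G0r x) _ t a snd tI.
have HF : forall F, bilinear_form F ->
    \sum_(p <- t) F p.1 p.2 = \sum_(p <- tr) F p.1 p.2 + F x W.
  move=> F bF; rewrite (big_split_pred _ a) addrC big_filter; congr (_ + _).
  have [_ [FDr _]] := bF.
  have [F0 _] := bil_sum0 bF.
  transitivity (\sum_(p <- t | a p) F x p.2); first by apply: eq_bigr => p /eqP ->.
  by have [_ ->] := @sum_add_on setT Logic.I (fun _ _ _ _ => Logic.I) (F x) (fun y z _ _ => FDr x y z) (F0 x) _ t a snd (fun _ _ => Logic.I).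
have HG : \sum_(p <- t) G p.1 p.2 = \sum_(p <- tr) G p.1 p.2 + G x W.
  rewrite (big_split_pred _ a) addrC big_filter; congr (_ + _).
  rewrite -HGx; by apply: eq_bigr => p /eqP ->.
have trL : forall p, p \in tr -> p.1 \in L'.
  move=> p; rewrite mem_filter => /andP [ap pt].
  by move: (tL p pt); rewrite inE => /orP [/eqP px|//]; move: ap; rewrite /a px eqxx.
have trI : forall p, p \in tr -> I p.2.
  by move=> p; rewrite mem_filter => /andP [_ pt]; exact: tI.
case: (pselect (in_span L' x)) => [[l [lL xl]]|nsp].
- pose ts := tr ++ [seq (q.2, q.1 *: W) | q <- l].
  have HFs : forall F, bilinear_form F ->
      \sum_(p <- ts) F p.1 p.2 = \sum_(p <- t) F p.1 p.2.
    move=> F bF; rewrite HF // big_cat big_map /=; congr (_ + _).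
    have [FDl [_ [FZl FZr]]] := bF.
    under eq_bigr => q _ do rewrite FZr.
    rewrite (@sum_lin1 (F^~ W)) ?xl // => [y z|k y].
  have HGs : \sum_(p <- ts) G p.1 p.2 = \sum_(p <- t) G p.1 p.2.
    rewrite HG big_cat big_map /=; congr (_ + _).
    under eq_bigr => q _ do rewrite GZr //.
    rewrite (@sum_lin1 (G^~ W)) ?xl // => [y z|k y]; [exact: GDl|exact: GZl].
  rewrite -HGs; apply: IH.
  + move=> p; rewrite mem_cat => /orP [/trL //|/mapP [q ql ->]] /=; exact: lL.
  + move=> p; rewrite mem_cat => /orP [/trI //|/mapP [q ql ->]] /=; exact: IZ.
  + by move=> F bF; rewrite HFs //; exact: tF.
- have [phi [phiD [phiZ [phix phiL]]]] := sep_span nsp.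
  have W0 : W = 0.
    apply/eqP/negP => /negP Wn0.
    have [psi [psiD [psiZ psiW]]] := sep_vec Wn0.
    pose F := fun u v => phi u * psi v.
    have bF : bilinear_form F.
      rewrite /F; split; first by move=> u1 u2 v; rewrite phiD mulrDl.
      split; first by move=> u v1 v2; rewrite psiD mulrDr.
      split; first by move=> k u v; rewrite phiZ mulrA.
      by move=> k u v; rewrite psiZ mulrCA.
    have := tF F bF; rewrite HF // big1_seq; last first.
      by move=> p /andP [_ /trL pL]; rewrite /F phiL // mul0r.
    by rewrite add0r /F phix psiW mul1r => /eqP; rewrite oner_eq0.
  rewrite HG W0 G0r addr0; apply: IH => // F bF.
  have := tF F bF; rewrite HF // W0.
  by have [-> _] := bil_sum0 bF; rewrite addr0.
Qed.

Lemma crux (t : seq (V * V)) : (forall p, p \in t -> I p.2) ->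
  (forall F, bilinear_form F -> \sum_(p <- t) F p.1 p.2 = 0) ->
  \sum_(p <- t) G p.1 p.2 = 0.
Proof.
apply: (@crux_L (map fst t)) => p pt; apply/mapP; by exists p.
Qed.
End Crux.
From mathcomp Require Import ring lra.
Local Open Scope complex_scope.

Section Tens.
Variables (R : realType) (V : normedModType R[i]).

Definition nr (x : V) : R := complex.Re `|x|.
Definition nc (k : R[i]) : R := complex.Re `|k|.

Lemma realC_ge0 (z : R[i]) : 0 <= z -> z = (complex.Re z)%:C.
Proof.
move=> z0; rewrite [LHS]complexE (ger0_Im z0) mulr0 addr0 //.
Qed.

Lemma nrE x : `|x| = (nr x)%:C.
Proof. by rewrite /nr -realC_ge0. Qed.

Lemma ncE k : `|k| = (nc k)%:C.
Proof. by rewrite /nc -realC_ge0. Qed.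

Lemma nr_ge0 x : 0 <= nr x.
Proof. by rewrite -ler0c -nrE normr_ge0. Qed.

Lemma nc_ge0 k : 0 <= nc k.
Proof. by rewrite -ler0c -ncE normr_ge0. Qed.

Lemma nrZ k x : nr (k *: x) = nc k * nr x.
Proof. by apply: complexI; rewrite -nrE normrZ ncE nrE rmorphM. Qed.

Lemma ncR (r : R) : nc r%:C = `|r|.
Proof.
apply: complexI; rewrite -ncE.
have [r0|r0] := leP 0 r.
  by rewrite ger0_norm ?lecR // ger0_norm.
by rewrite ler0_norm ?lecR ?ltW // ler0_norm ?ltW // rmorphN.
Qed.

Definition rc (t : seq (V * V)) : R := \sum_(p <- t) nr p.1 * nr p.2.

Lemma rc_ge0 t : 0 <= rc t.
Proof. by apply: sumr_ge0 => p _; apply: mulr_ge0; apply: nr_ge0. Qed.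

Lemma rep_costE t : rep_cost t = (rc t)%:C.
Proof.
rewrite /rep_cost /rc rmorph_sum; apply: eq_bigr => p _.
by rewrite !nrE rmorphM.
Qed.

Lemma rc_cat s t : rc (s ++ t) = rc s + rc t.
Proof. by rewrite /rc big_cat. Qed.

Definition scl (k : R[i]) (t : seq (V * V)) := [seq (p.1, k *: p.2) | p <- t].

Lemma rc_scl k t : rc (scl k t) = nc k * rc t.
Proof.
rewrite /rc /scl big_map mulr_sumr; apply: eq_bigr => p _ /=.
by rewrite nrZ mulrCA.
Qed.

Lemma sum_scl (F : V -> V -> R[i]) k t : bilinear_form F ->
  \sum_(p <- scl k t) F p.1 p.2 = k * \sum_(p <- t) F p.1 p.2.
Proof.
move=> [_ [_ [_ FZr]]]; rewrite /scl big_map mulr_sumr.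
by apply: eq_bigr => p _ /=; rewrite FZr.
Qed.

Lemma teq_refl (t : seq (V * V)) : tensor_eq t t. Proof. by []. Qed.
Lemma teq_sym (s t : seq (V * V)) : tensor_eq s t -> tensor_eq t s.
Proof. by move=> H F bF; rewrite H. Qed.
Lemma teq_trans (s t u : seq (V * V)) : tensor_eq s t -> tensor_eq t u -> tensor_eq s u.
Proof. by move=> H1 H2 F bF; rewrite H1 // H2. Qed.
Lemma teq_cat (a b c d : seq (V * V)) : tensor_eq a b -> tensor_eq c d -> tensor_eq (a ++ c) (b ++ d).
Proof. by move=> H1 H2 F bF; rewrite !big_cat H1 // H2. Qed.
Lemma teq_scl k (s t : seq (V * V)) : tensor_eq s t -> tensor_eq (scl k s) (scl k t).
Proof. by move=> H F bF; rewrite !sum_scl // H. Qed.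

End Tens.
Section TensExt.
Variables (R : realType) (V : normedModType R[i]).
Variable Kc : R.
Variables (P0 : set (V * V)) (g0 : V * V -> R).
Hypothesis P00 : forall u, P0 (u, 0).
Hypothesis H0b : forall u v r, P0 (u, v) ->
  P0 (u, r%:C *: v) /\ g0 (u, r%:C *: v) = r * g0 (u, v).
Hypothesis H0c : forall t, (forall p, p \in t -> P0 p) -> forall t' : seq (V * V),
  tensor_eq t t' -> `|\sum_(p <- t) g0 p| <= Kc * rc t'.

Definition TAdm (a : set (V * V) * (V * V -> R)) :=
  (forall p, P0 p -> a.1 p /\ a.2 p = g0 p) /\
  (forall u v r, a.1 (u, v) -> a.1 (u, r%:C *: v) /\ a.2 (u, r%:C *: v) = r * a.2 (u, v)) /\
  (forall t, (forall p, p \in t -> a.1 p) -> forall t' : seq (V * V),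
     tensor_eq t t' -> `|\sum_(p <- t) a.2 p| <= Kc * rc t').

Lemma onestep (P : set (V * V)) (g : V * V -> R) : TAdm (P, g) ->
  forall u0 v0, ~ P (u0, v0) -> exists b, TAdm b /\ pext (P, g) b /\ b.1 (u0, v0).
Proof.
move=> [Pa [Pb Pc]] u0 v0 nP /=.
rewrite /= in Pa Pb Pc.
have Pu0 : P (u0, 0) by case: (Pa _ (P00 u0)).
have v0n0 : v0 != 0 by apply/eqP => v00; apply: nP; rewrite v00.
have g0r : forall u, P (u, 0) -> g (u, 0) = 0.
  by move=> u Pu; have [_] := Pb u 0 0 Pu; rewrite scaler0 mul0r.
have ray_uniq : forall r s : R, r%:C *: v0 = s%:C *: v0 -> r = s.
  move=> r s /eqP; rewrite -subr_eq0 -scalerBl scaler_eq0 (negbTE v0n0) orbF subr_eq0.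
  by move=> /eqP; apply: complexI.
pose coef (v : V) : R := xget 0 [set r : R | v = r%:C *: v0].
have coefE : forall r, coef (r%:C *: v0) = r.
  by move=> r; apply: xget_unique => // y /= /ray_uniq.
pose adm (s s' : seq (V * V)) := (forall p, p \in s -> P p) /\
   tensor_eq (s ++ [:: (u0, v0)]) s'.
have gN : forall s : seq (V * V), (forall p, p \in s -> P p) ->
    \sum_(p <- scl (-1)%:C s) g p = - \sum_(p <- s) g p.
  move=> s sP; rewrite /scl big_map -sumrN; apply: eq_big_seq => -[u v] /sP Puv /=.
  by have [_ ->] := Pb u v (-1) Puv; rewrite mulN1r.
have sclP : forall (r : R) (s : seq (V * V)), (forall p, p \in s -> P p) ->
    forall p, p \in scl r%:C s -> P p.
  by move=> r s sP p /mapP [[u v] /sP Puv ->] /=; case: (Pb u v r Puv).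
have cons : forall s1 s1' s2 s2', adm s1 s1' -> adm s2 s2' ->
    - (Kc * rc s1') - \sum_(p <- s1) g p <= Kc * rc s2' - \sum_(p <- s2) g p.
  move=> s1 s1' s2 s2' [s1P H1] [s2P H2].
  have mem : forall p, p \in s2 ++ scl (-1)%:C s1 -> P p.
    move=> p; rewrite mem_cat => /orP [/s2P //|]; exact: sclP.
  have teq : tensor_eq (s2 ++ scl (-1)%:C s1) (s2' ++ scl (-1)%:C s1').
    move=> F bF; rewrite !big_cat !sum_scl // -H1 // -H2 // !big_cat !big_seq1.
    rewrite rmorphN1 /=; ring.
  have := Pc _ mem _ teq.
  rewrite big_cat /= gN // rc_cat rc_scl ncR normrN normr1 mul1r.
  rewrite ler_norml => /andP [_ H]; lra.
pose Lset := [set y : R | exists s s', adm s s' /\ y = - (Kc * rc s') - \sum_(p <- s) g p].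
have adm0 : adm [::] [:: (u0, v0)] by split.
have Lne : Lset !=set0 by exists (- (Kc * rc [:: (u0, v0)]) - \sum_(p <- [::]) g p), [::], [:: (u0, v0)].
have Lub : forall s s', adm s s' -> ubound Lset (Kc * rc s' - \sum_(p <- s) g p).
  move=> s s' Hs y [s1 [s1' [H1 ->]]]; exact: cons.
pose c := sup Lset.
have hs : has_sup Lset by split => //; exists (Kc * rc [:: (u0, v0)] - \sum_(p <- [::]) g p); exact: Lub.
have cons1 : forall s s', adm s s' -> `|\sum_(p <- s) g p + c| <= Kc * rc s'.
  move=> s s' Hs.
  have lo : - (Kc * rc s') - \sum_(p <- s) g p <= c.
    by apply: sup_upper_bound => //; exists s, s'.
  have hi : c <= Kc * rc s' - \sum_(p <- s) g p by apply: ge_sup => //; exact: Lub.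
  rewrite ler_norml; apply/andP; split; lra.
have consq : forall s (q : R) (s' : seq (V * V)), (forall p, p \in s -> P p) ->
    tensor_eq (s ++ [:: (u0, q%:C *: v0)]) s' -> `|\sum_(p <- s) g p + q * c| <= Kc * rc s'.
  move=> s q s' sP H.
  have [q0|q0] := eqVneq q 0.
    rewrite q0 mul0r addr0; apply: Pc => // F bF; rewrite -H // big_cat big_seq1 /= q0 rmorph0 scale0r.
    by have [-> _] := bil_sum0 bF; rewrite addr0.
  have qC0 : q%:C != 0 by apply: contra q0 => /eqP qq; apply/eqP; apply: complexI.
  have adm1 : adm (scl (q^-1)%:C s) (scl (q^-1)%:C s').
    split; first exact: sclP.
    move=> F bF; rewrite big_cat big_seq1 !sum_scl // -H // big_cat big_seq1 /=.
    have [_ [_ [_ FZr]]] := bF; rewrite FZr fmorphV.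
    by field.
  have := cons1 _ _ adm1.
  have -> : \sum_(p <- scl (q^-1)%:C s) g p = q^-1 * \sum_(p <- s) g p.
    rewrite /scl big_map mulr_sumr; apply: eq_big_seq => -[u v] /sP Puv /=.
    by have [_ ->] := Pb u v (q^-1) Puv.
  rewrite rc_scl ncR => H'.
  have -> : \sum_(p <- s) g p + q * c = q * (q^-1 * \sum_(p <- s) g p + c).
    by rewrite mulrDr mulrA mulfV // mul1r.
  rewrite normrM; apply: le_trans (ler_wpM2l (normr_ge0 q) H') _.
  rewrite normrV ?unitfE //.
  have qn0 : `|q| != 0 by rewrite normr_eq0.
  have -> : `|q| * (Kc * (`|q|^-1 * rc s')) = Kc * rc s' by field.
  by [].
pose P' : set (V * V) := [set p | P p \/ (p.1 = u0 /\ exists r : R, p.2 = r%:C *: v0)].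
pose g' (p : V * V) := if `[< P p >] then g p else c * coef p.2.
have g'P : forall p, P p -> g' p = g p by move=> p Pp; rewrite /g' asboolT.
have g'N : forall p, ~ P p -> g' p = c * coef p.2 by move=> p Pp; rewrite /g' asboolF.
exists (P', g'); split; last first.
  split; last by right; split => //; exists 1; rewrite rmorph1 scale1r.
  by split => [p Pp|p Pp /=]; [left|rewrite g'P].
split.
  by move=> p /Pa [Pp <-]; split; [left|rewrite /= g'P].
split.
  move=> u v r /= H.
  have [Puv|nPuv] := pselect (P (u, v)).
    have [Pr gr] := Pb u v r Puv.
    by split; [left|rewrite !g'P].
  case: H => [//|[/= eu [s ev]]]; subst u v.
  have s0 : s != 0 by apply/eqP => s0; apply: nPuv; rewrite s0 scale0r.
  have E : r%:C *: (s%:C *: v0) = (r * s)%:C *: v0 by rewrite scalerA rmorphM.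
  rewrite E; split; first by right; split => //; exists (r * s).
  rewrite [g' (u0, s%:C *: v0)]g'N // coefE.
  have [Pr|nPr] := pselect (P (u0, (r * s)%:C *: v0)).
    have r0 : r = 0.
      apply/eqP/negP => /negP r0; apply: nPuv.
      have [+ _] := Pb _ _ r^-1 Pr.
      by rewrite scalerA -rmorphM mulrA mulVf // mul1r.
    by rewrite r0 !mul0r rmorph0 scale0r g'P ?g0r.
  by rewrite g'N // coefE mulrCA mulrA.
move=> t tP t' teq /=.
pose aP (p : V * V) := `[< P p >].
pose S := \sum_(p <- t | ~~ aP p) coef p.2.
have Nform : forall p, p \in t -> ~~ aP p -> p = (u0, (coef p.2)%:C *: v0).
  move=> [u v] /tP [Pp|[/= -> [r ->]]] /=; first by rewrite /aP asboolT.
  by rewrite coefE.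
have Hsplit : \sum_(p <- t) g' p = \sum_(p <- [seq p <- t | aP p]) g p + c * S.
  rewrite (big_split_pred _ aP) big_filter; congr (_ + _).
    by apply: eq_bigr => p /asboolP Pp; rewrite g'P.
  by rewrite mulr_sumr; apply: eq_bigr => p /asboolPn Pp; rewrite g'N.
have teq1 : tensor_eq ([seq p <- t | aP p] ++ [:: (u0, S%:C *: v0)]) t.
  move=> F bF; rewrite big_cat big_filter big_seq1 /= [RHS](big_split_pred _ aP).
  congr (_ + _).
  have [_ [_ [_ FZr]]] := bF.
  rewrite FZr rmorph_sum mulr_suml -big_filter -[RHS]big_filter.
  apply: eq_big_seq => -[u v]; rewrite mem_filter => /andP [nap pt].
  case: (Nform _ pt nap) => /= -> ev.
  by rewrite [in RHS]ev FZr.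
have memf : forall p, p \in [seq p <- t | aP p] -> P p.
  by move=> p; rewrite mem_filter => /andP [/asboolP].
have := consq [seq p <- t | aP p] S t' memf (teq_trans teq1 teq).
by rewrite Hsplit mulrC.
Qed.

Theorem tensor_ext : exists g : V * V -> R, (forall p, P0 p -> g p = g0 p) /\
  (forall u v r, g (u, r%:C *: v) = r * g (u, v)) /\
  (forall t t' : seq (V * V), tensor_eq t t' -> `|\sum_(p <- t) g p| <= Kc * rc t').
Proof.
have [||m [[ma [mb mc]] [_ mmax]]] := @partial_zorn _ R TAdm (P0, g0).
- split; first by move=> p Pp.
  by split.
- move=> C CA Ctot [a1 Ca1].
  exists (uP C, uG C a1); split; last by move=> a Ca; exact: union_ext.
  have [Aa _] := CA _ Ca1.
  split.
    move=> p /Aa [Pp gp]; split; first by exists a1.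
    by rewrite -gp; case: (union_ext Ctot a1 Ca1) => _ <-.
  split.
    move=> u v r [a [Ca Puv]].
    have [_ [Ab _]] := CA _ Ca.
    have [Pr gr] := Ab u v r Puv.
    have [_ E] := union_ext Ctot a1 Ca.
    by split; [exists a|rewrite -!E].
  move=> t tP t' teq.
  have [a [Ca aT]] := union_fin Ctot Ca1 tP.
  have [_ [_ Ac]] := CA _ Ca.
  have [_ E] := union_ext Ctot a1 Ca.
  have <- : \sum_(p <- t) a.2 p = \sum_(p <- t) uG C a1 p.
    by apply: eq_big_seq => p pt; rewrite E //; exact: aT.
  exact: Ac.
- have mT : forall p, m.1 p.
    move=> [u0 v0]; apply/not_notP => nP.
    have [b [Ab [mb' bin]]] := @onestep m.1 m.2 (conj ma (conj mb mc)) u0 v0 nP.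
    by apply: nP; apply: (mmax b Ab mb').
  exists m.2; split; first by move=> p /ma [].
  split; first by move=> u v r; case: (mb u v r (mT _)).
  by move=> t t' teq; apply: mc => // p _.
Qed.
End TensExt.
Section Cplx.
Variables (R : realType) (V : normedModType R[i]).
Variable Kc : R.
Hypothesis Kc0 : 0 <= Kc.
Variable g : V * V -> R.
Hypothesis gZ : forall u v r, g (u, r%:C *: v) = r * g (u, v).
Hypothesis ginv : forall t t' : seq (V * V), tensor_eq t t' -> `|\sum_(p <- t) g p| <= Kc * rc t'.

Lemma ginv0 (t : seq (V * V)) : (forall F, bilinear_form F -> \sum_(p <- t) F p.1 p.2 = 0) ->
  \sum_(p <- t) g p = 0.
Proof.
move=> H; have := ginv (t' := [::]) (t := t) _.
  rewrite /rc big_nil mulr0 normr_le0 => /(_ _) /eqP; apply.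
by move=> F bF; rewrite H // big_nil.
Qed.

Lemma bilN (F : V -> V -> R[i]) u v : bilinear_form F -> F u (- v) = - F u v.
Proof. by move=> [_ [_ [_ FZr]]]; rewrite -scaleN1r FZr mulN1r. Qed.

Lemma gN u v : g (u, - v) = - g (u, v).
Proof.
have -> : - v = (-1)%:C *: v by rewrite rmorphN1 scaleN1r.
by rewrite gZ mulN1r.
Qed.

Lemma gDl u1 u2 v : g (u1 + u2, v) = g (u1, v) + g (u2, v).
Proof.
have : \sum_(p <- [:: (u1 + u2, v); (u1, - v); (u2, - v)]) g p = 0.
  apply: ginv0 => F bF; rewrite !big_cons big_nil /= !(bilN _ _ bF) addr0.
  by have [-> _] := bF; rewrite -opprD subrr.
by rewrite !big_cons big_nil /= !gN addr0 => /eqP; rewrite -opprD subr_eq0 => /eqP.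
Qed.

Lemma gDr u v1 v2 : g (u, v1 + v2) = g (u, v1) + g (u, v2).
Proof.
have : \sum_(p <- [:: (u, v1 + v2); (u, - v1); (u, - v2)]) g p = 0.
  apply: ginv0 => F bF; rewrite !big_cons big_nil /= !(bilN _ _ bF) addr0.
  by have [_ [-> _]] := bF; rewrite -opprD subrr.
by rewrite !big_cons big_nil /= !gN addr0 => /eqP; rewrite -opprD subr_eq0 => /eqP.
Qed.

Lemma gbal k u v : g (k *: u, v) = g (u, k *: v).
Proof.
have : \sum_(p <- [:: (k *: u, v); (u, - (k *: v))]) g p = 0.
  apply: ginv0 => F bF; rewrite !big_cons big_nil /= !(bilN _ _ bF) addr0.
  by have [_ [_ [-> ->]]] := bF; rewrite subrr.
by rewrite !big_cons big_nil /= gN addr0 => /eqP; rewrite subr_eq0 => /eqP.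
Qed.

Lemma gZC k u v : g (u, k *: v) =
  complex.Re k * g (u, v) + complex.Im k * g (u, 'i *: v).
Proof.
rewrite {1}(complexE k) scalerDl gDr gZ.
have -> : ('i * (complex.Im k)%:C) *: v = (complex.Im k)%:C *: ('i *: v) by rewrite scalerA mulrC.
by rewrite gZ.
Qed.

Definition Ft (u v : V) : R[i] := (g (u, v))%:C - 'i * (g (u, 'i *: v))%:C.

Lemma Ft_Zr k u v : Ft u (k *: v) = k * Ft u v.
Proof.
rewrite /Ft scalerA gZC [g (u, ('i * k) *: v)]gZC.
case: k => a b /=; simpc; apply/eqP; rewrite eq_complex /=; apply/andP; split; apply/eqP; ring.
Qed.

Lemma Ft_bil : bilinear_form Ft.
Proof.
split.
  by move=> a b c; rewrite /Ft !gDl !rmorphD; ring.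
split.
  by move=> a b c; rewrite /Ft scalerDr !gDr !rmorphD; ring.
split; last by move=> k a b; exact: Ft_Zr.
move=> k a b; rewrite -Ft_Zr /Ft !gbal.
by rewrite [k *: ('i *: b)]scalerA [('i : R[i]) *: (k *: b)]scalerA [k * _]mulrC.
Qed.

Lemma Re_Ft u v : complex.Re (Ft u v) = g (u, v).
Proof. by rewrite /Ft; simpc. Qed.

Lemma g_bound u v : `|g (u, v)| <= Kc * (nr u * nr v).
Proof.
have := @ginv [:: (u, v)] [:: (u, v)] (@teq_refl _ _ _).
by rewrite big_seq1 /rc big_seq1.
Qed.

Lemma Ft_bdd : bdd_bilinear Ft.
Proof.
split; first exact: Ft_bil.
exists Kc%:C => a b.
have [z0|zn0] := eqVneq (Ft a b) 0.
  rewrite z0 normr0 !nrE -!rmorphM ler0c; apply: mulr_ge0; first apply: mulr_ge0 => //; exact: nr_ge0.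
pose w := `|Ft a b| / Ft a b.
have wz : Ft a (w *: b) = `|Ft a b| by rewrite Ft_Zr /w mulfVK.
have nw : nc w = 1.
  apply: complexI; rewrite -ncE /w normrM normfV normr_id mulfV //.
  by rewrite normr_eq0.
have := g_bound a (w *: b).
rewrite nrZ nw mul1r -Re_Ft wz => H.
rewrite ncE !nrE -!rmorphM lecR -mulrA; apply: le_trans H.
exact: ler_norm.
Qed.
End Cplx.
Section Aux.
Variables (R : realType) (V : normedModType R[i]).

Lemma Re_add (x y : R[i]) : complex.Re (x + y) = complex.Re x + complex.Re y.
Proof. by case: x => a b; case: y => c d. Qed.

Lemma Re_opp (x : R[i]) : complex.Re (- x) = - complex.Re x.
Proof. by case: x. Qed.

Lemma Re_sum (T : Type) (l : seq T) (f : T -> R[i]) :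
  complex.Re (\sum_(p <- l) f p) = \sum_(p <- l) complex.Re (f p).
Proof.
elim: l => [|q l IH]; first by rewrite !big_nil.
by rewrite !big_cons Re_add IH.
Qed.

Lemma ReM_real (r : R) (z : R[i]) : complex.Re (r%:C * z) = r * complex.Re z.
Proof. by case: z => a b; simpc. Qed.

Lemma Re_le_nc (z : R[i]) : `|complex.Re z| <= nc z.
Proof.
rewrite /nc normc_def /= -sqrtr_sqr ler_sqrt; last first.
  by apply: addr_ge0; apply: sqr_ge0.
by rewrite lerDl sqr_ge0.
Qed.

Lemma bound_norm (A B C : R[i]) : 0 <= A -> 0 <= B -> A <= C * B -> A <= `|C| * B.
Proof.
move=> A0 B0 H.
have CB0 : 0 <= C * B := le_trans A0 H.
by rewrite -(ger0_norm B0) -normrM ger0_norm.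
Qed.

Lemma eps_le (x a b : R) : 0 <= b -> (forall e, 0 < e -> x <= a + b * e) -> x <= a.
Proof.
move=> b0 H; apply/ler_addgt0Pr => e e0.
have b1 : 0 < b + 1 by lra.
have := H (e / (b + 1)) (divr_gt0 e0 b1).
have : b * (e / (b + 1)) <= e.
  rewrite mulrA ler_pdivrMr //; nra.
lra.
Qed.

Lemma bdd_bound (F : V -> V -> R[i]) : bdd_bilinear F ->
  exists M : R[i], 0 <= M /\ forall a b, `|F a b| <= M * `|a| * `|b|.
Proof.
move=> [_ [M HM]]; exists `|M|; split => // a b.
rewrite -mulrA; by apply: bound_norm => //; rewrite mulrA.
Qed.

Variable mul : V -> V -> V.
Hypothesis Hmul : banach_algebra_mul mul.

Lemma bb_add (F G : V -> V -> R[i]) : bdd_bilinear F -> bdd_bilinear G ->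
  bdd_bilinear (fun x y => F x y + G x y).
Proof.
move=> bF bG.
have [[FDl [FDr [FZl FZr]]] _] := bF; have [[GDl [GDr [GZl GZr]]] _] := bG.
have [M [M0 HM]] := bdd_bound bF; have [N [N0 HN]] := bdd_bound bG.
split.
  split; first by move=> a b c; rewrite FDl GDl; ring.
  split; first by move=> a b c; rewrite FDr GDr; ring.
  split; first by move=> k a b; rewrite FZl GZl; ring.
  by move=> k a b; rewrite FZr GZr; ring.
exists (M + N) => a b; apply: le_trans (ler_normD _ _) _.
rewrite !mulrDl; exact: lerD.
Qed.

Lemma bb_scale (k : R[i]) (F : V -> V -> R[i]) : bdd_bilinear F ->
  bdd_bilinear (fun x y => k * F x y).
Proof.
move=> bF.
have [[FDl [FDr [FZl FZr]]] _] := bF.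
have [M [M0 HM]] := bdd_bound bF.
split.
  split; first by move=> a b c; rewrite FDl; ring.
  split; first by move=> a b c; rewrite FDr; ring.
  split; first by move=> l a b; rewrite FZl; ring.
  by move=> l a b; rewrite FZr; ring.
exists (`|k| * M) => a b; rewrite normrM -!mulrA; apply: ler_wpM2l => //.
by rewrite mulrA.
Qed.

Lemma bb_right (F : V -> V -> R[i]) c : bdd_bilinear F ->
  bdd_bilinear (fun x y => F x (mul y c)).
Proof.
move=> bF.
have [mA [mDl [mDr [mZl [mZr mN]]]]] := Hmul.
have [[FDl [FDr [FZl FZr]]] _] := bF.
have [M [M0 HM]] := bdd_bound bF.
split.
  split; first by move=> a b d; rewrite FDl.
  split; first by move=> a b d; rewrite mDl FDr.
  split; first by move=> l a b; rewrite FZl.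
  by move=> l a b; rewrite mZl FZr.
exists (M * `|c|) => a b; apply: le_trans (HM _ _) _.
have := mN b c => H.
have -> : M * `|c| * `|a| * `|b| = M * `|a| * (`|b| * `|c|) by ring.
apply: ler_wpM2l => //; apply: mulr_ge0 => //.
Qed.

Lemma bb_left (F : V -> V -> R[i]) c : bdd_bilinear F ->
  bdd_bilinear (fun x y => F (mul c x) y).
Proof.
move=> bF.
have [mA [mDl [mDr [mZl [mZr mN]]]]] := Hmul.
have [[FDl [FDr [FZl FZr]]] _] := bF.
have [M [M0 HM]] := bdd_bound bF.
split.
  split; first by move=> a b d; rewrite mDr FDl.
  split; first by move=> a b d; rewrite FDr.
  split; first by move=> l a b; rewrite mZr FZl.
  by move=> l a b; rewrite FZr.
exists (M * `|c|) => a b; apply: le_trans (HM _ _) _.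
have := mN c a => H.
have -> : M * `|c| * `|a| * `|b| = M * (`|c| * `|a|) * `|b| by ring.
apply: ler_wpM2r => //; apply: ler_wpM2l => //.
Qed.

End Aux.
Theorem corollary4p2 (R : realType) (V : completeNormedModType R[i])
    (mul : V -> V -> V) :
  banach_algebra_mul mul ->
  biflat mul ->
  has_left_approx_identity mul ->
  (forall I : set V, closed_ideal mul I -> respects_isomorphically I) ->
  ideally_amenable mul.
Proof.
move=> Hmul [rho [rhoF [rhoD [rhoZ [_ [rhoR [rhoL rhoDel]]]]]]].
move=> [Dt [le [e [_ [lerefl [_ [_ eapx]]]]]]] resp I Iid D [Dfun [Dadd [DZ [[CD DB] Dmul]]]].
have [mA [mDl [mDr [mZl [mZr mN]]]]] := Hmul.
have [Icl [I0 [ID [IZ Imul]]]] := Iid.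
have [lam [lam1 respI]] := resp I Iid.
have DaD : forall a x y, I x -> I y -> D a (x + y) = D a x + D a y.
  by move=> a; case: (Dfun a).
have DaZ : forall a k x, I x -> D a (k *: x) = k * D a x.
  by move=> a; case: (Dfun a) => _ [].
have IN : forall x, I x -> I (- x).
  by move=> x Ix; rewrite -scaleN1r; exact: IZ.
have IB : forall x y, I x -> I y -> I (x - y).
  by move=> x y Ix Iy; apply: ID => //; exact: IN.
have DaB : forall a x y, I x -> I y -> D a (x - y) = D a x - D a y.
  move=> a x y Ix Iy; have Iny := IN y Iy; rewrite DaD //.
  by rewrite -[- y]scaleN1r DaZ // mulN1r.
have DB' : forall a x, I x -> `|D a x| <= `|CD| * `|a| * `|x|.
  move=> u x Ix; have H := DB u x Ix.
  have y0 : 0 <= CD * `|u| * `|x| := le_trans (normr_ge0 _) H.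
  by rewrite -(ger0_norm y0) !normrM !normr_id in H.
pose lr := complex.Re lam.
have lam0 : 0 <= lam by apply: le_trans lam1.
have lamE : lam = lr%:C by apply: realC_ge0.
have lr1 : 1 <= lr by rewrite -lecR -lamE.
pose Kc := nc CD * lr.
have Kc0 : 0 <= Kc by apply: mulr_ge0; [exact: nc_ge0|lra].
have Dcrux : forall t t'' : seq (V * V), (forall p, p \in t -> I p.2) ->
    (forall p, p \in t'' -> I p.2) -> tensor_eq t'' t ->
    \sum_(p <- t) D p.1 p.2 = \sum_(p <- t'') D p.1 p.2.
  move=> t t'' tI t2I teq.
  have := @crux _ V I I0 ID IZ D Dadd DZ DaD (fun k u w Iw => DaZ u k w Iw)
    (t ++ [seq (p.1, - p.2) | p <- t'']).
  rewrite big_cat /= big_map /=.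
  have -> : \sum_(j <- t'') D j.1 (- j.2) = - \sum_(p <- t'') D p.1 p.2.
    rewrite -sumrN; apply: eq_big_seq => p /t2I Ip.
    by rewrite -[- p.2]scaleN1r DaZ // mulN1r.
  move=> H; apply/eqP; rewrite -subr_eq0; apply/eqP; apply: H.
    move=> p; rewrite mem_cat => /orP [/tI //|/mapP [q /t2I Iq ->]] /=; exact: IN.
  move=> F bF; rewrite big_cat big_map /=.
  have -> : \sum_(j <- t'') F j.1 (- j.2) = - \sum_(j <- t'') F j.1 j.2.
    by rewrite -sumrN; apply: eq_bigr => j _; exact: (bilN j.1 j.2 bF).
  by rewrite teq // subrr.
pose P0 : set (V * V) := [set p | I p.2].
pose g0 (p : V * V) : R := complex.Re (- D p.1 p.2).
have H0c : forall t, (forall p, p \in t -> P0 p) -> forall t' : seq (V * V),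
    tensor_eq t t' -> `|\sum_(p <- t) g0 p| <= Kc * rc t'.
  move=> t tI t' teq.
  have -> : \sum_(p <- t) g0 p = complex.Re (- \sum_(p <- t) D p.1 p.2).
    by rewrite -sumrN Re_sum.
  apply: le_trans (Re_le_nc _) _; rewrite /nc normrN.
  apply: (@eps_le _ _ _ (nc CD)) => [|eps eps0]; first exact: nc_ge0.
  have pc : pi_costs setT t (rep_cost t').
    by exists t'; split => //; split => //; exact: teq_sym.
  have e0C : 0 < eps%:C by rewrite ltcR.
  have [x [[t'' [t''I [teq'' xE]]] xle]] := respI t tI (rep_cost t') pc (eps%:C) e0C.
  rewrite xE in xle.
  rewrite (Dcrux t t'' tI t''I teq'').
  have H1 : `|\sum_(p <- t'') D p.1 p.2| <= `|CD| * rep_cost t''.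
    apply: le_trans (ler_norm_sum _ _ _) _.
    rewrite /rep_cost mulr_sumr !big_seq; apply: ler_sum => p pt.
    rewrite mulrA; apply: DB'; exact: (t''I p pt).
  have H2 : `|CD| * rep_cost t'' <= `|CD| * (lam * rep_cost t' + eps%:C).
    by apply: ler_wpM2l.
  have := le_trans H1 H2.
  rewrite ncE [`|CD|]ncE lamE !rep_costE -!rmorphM -rmorphD -rmorphM lecR.
  by rewrite /Kc mulrDr mulrA.
have P00 : forall u, P0 (u, 0) by move=> u; exact: I0.
have H0b : forall u v r, P0 (u, v) ->
    P0 (u, r%:C *: v) /\ g0 (u, r%:C *: v) = r * g0 (u, v).
  move=> u v r Iv; split; first exact: IZ.
  by rewrite /g0 /= DaZ // -mulrN ReM_real.
have [g [gP0 [gZ ginv]]] := @tensor_ext R V Kc P0 g0 P00 H0b H0c.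
pose Fb := Ft g.
have bFb : bdd_bilinear Fb := Ft_bdd Kc0 gZ ginv.
have FbI : forall u w, I w -> Fb u w = - D u w.
  move=> u w Iw; rewrite /Fb /Ft !gP0 /g0 /=; last 2 first.
    exact: IZ.
    exact: Iw.
  by rewrite DaZ //; case: (D u w) => a b; simpc.
pose f := rho Fb.
have [fD [fZ [Cf fB]]] := rhoF Fb bFb.
rewrite /inner_into_dual; exists (rho Fb); split.
  split; first by move=> x y _ _; exact: fD.
  split; first by move=> k x _; exact: fZ.
  by exists Cf => x _; exact: fB.
move=> a x Ix.
pose H1 := fun u v => Fb u (mul v a).
pose H2 := fun u v => Fb (mul a u) v.
pose H2n := fun u v => -1 * H2 u v.
pose Hd := fun u v => H1 u v + H2n u v.
have bH1 : bdd_bilinear H1 := bb_right Hmul a bFb.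
have bH2 : bdd_bilinear H2 := bb_left Hmul a bFb.
have bH2n : bdd_bilinear H2n := bb_scale (-1) bH2.
have bHd : bdd_bilinear Hd := bb_add bH1 bH2n.
have e1 : rho Fb (mul x a) = rho H1 x := esym (rhoR a Fb bFb x).
have e2 : rho Fb (mul a x) = rho H2 x := esym (rhoL a Fb bFb x).
have e3 : rho Hd x = rho H1 x + rho H2n x := rhoD H1 H2n bH1 bH2n x.
have e4 : rho H2n x = -1 * rho H2 x := rhoZ (-1) H2 bH2 x.
rewrite e1 e2.
have -> : rho H1 x - rho H2 x = rho Hd x by rewrite e3 e4 mulN1r.
pose psi y := D a (mul y x).
have Imx : forall y, I (mul y x) by move=> y; exact: (Imul y x Ix).1.
have bpsi : bdd_functional_on setT psi.
  split; first by move=> y1 y2 _ _; rewrite /psi mDl DaD.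
  split; first by move=> k y _; rewrite /psi mZl DaZ.
  exists (`|CD| * `|a| * `|x|) => y _; rewrite /psi.
  apply: le_trans (DB' _ _ (Imx y)) _.
  have := mN y x => H.
  have -> : `|CD| * `|a| * `|x| * `|y| = `|CD| * `|a| * (`|y| * `|x|) by ring.
  apply: ler_wpM2l => //; apply: mulr_ge0 => //.
have psiE : (fun u v => Hd u (mul v x)) = (fun u v => psi (mul u v)).
  apply: funext => u; apply: funext => v.
  rewrite /Hd /H1 /H2n /H2 /psi.
  have Ivx : I (mul v x) := Imx v.
  have Ivxa : I (mul (mul v x) a) := (Imul a (mul v x) Ivx).2.
  rewrite (FbI _ _ Ivxa) (FbI _ _ Ivx) (Dmul a u (mul v x) Ivx) (mA u v x).
  ring.
have rd : forall y, rho Hd (mul y x) = D a (mul y x).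
  by move=> y; rewrite -(rhoR x Hd bHd y) psiE; exact: rhoDel psi bpsi y.
have [hD [hZ [Ch hB]]] := rhoF Hd bHd.
have hB' : forall y, `|rho Hd y| <= `|Ch| * `|y|.
  by move=> y; apply: bound_norm => //; exact: hB.
have rhoB : forall u v, rho Hd (u - v) = rho Hd u - rho Hd v.
  move=> u v; rewrite hD //.
  by rewrite -[- v]scaleN1r hZ // mulN1r.
have key : forall eps : R, 0 < eps ->
    nc (rho Hd x - D a x) <= 0 + (nc Ch + nc CD * nr a) * eps.
  move=> eps e0.
  have e0C : 0 < eps%:C by rewrite ltcR.
  have [d0 Hd0] := eapx x (eps%:C) e0C.
  have dist := Hd0 d0 (lerefl d0).
  set y := mul (e d0) x in dist.
  have Iy : I y := Imx (e d0).
  have Ez : rho Hd x - D a x = rho Hd (x - y) + D a (y - x).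
    rewrite DaB // rhoB rd; ring.
  have Hc : `|rho Hd x - D a x| <= (`|Ch| + `|CD| * `|a|) * eps%:C.
    rewrite Ez; apply: le_trans (ler_normD _ _) _.
    apply: le_trans (lerD (hB' _) (DB' a _ (IB _ _ Iy Ix))) _.
    rewrite [`|x - y|]distrC.
    have -> : `|Ch| * `|y - x| + `|CD| * `|a| * `|y - x| = (`|Ch| + `|CD| * `|a|) * `|y - x| by ring.
    apply: ler_wpM2l.
      by apply: addr_ge0 => //; apply: mulr_ge0.
    exact: ltW.
  move: Hc; rewrite add0r ncE [`|Ch|]ncE [`|CD|]ncE nrE -!rmorphM -rmorphD -rmorphM lecR.
  by [].
have z0 : nc (rho Hd x - D a x) <= 0.
  apply: (eps_le _ key); apply: addr_ge0; first exact: nc_ge0.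
  apply: mulr_ge0; [exact: nc_ge0|exact: nr_ge0].
have : `|rho Hd x - D a x| = 0.
  rewrite ncE; have -> : nc (rho Hd x - D a x) = 0 by apply/eqP; rewrite eq_le z0 nc_ge0.
  by rewrite rmorph0.
by move/eqP; rewrite normr_eq0 subr_eq0 => /eqP.
Qed.
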